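(* Let $\Pi_n$ be the graph on $[n+1]$ with edge multiset $\{(i,i+1),(i,n+1): i=1,\ldots,n\}$ (so $(n,n+1)$ appears twice), and let ${\bf a}=(a_1,\ldots,a_n,-\sum a_i)$ with $a_i\in\mathbb{Z}_{>0}$. The number of types of cells of the canonical subdivision of $\mathcal{F}_{\Pi_n}({\bf a})$ is the Catalan number $C_n=\frac{1}{n+1}\binom{2n}{n}$.
   Context: $\mathcal{F}_H({\bf a})$ is the set of $f\in\mathbb{R}_{\ge0}^{E(H)}$ with outflow minus inflow at each vertex $k\le n$ equal to $a_k$. Noncrossing trees: for ordered lists $L=(x_1,\ldots,x_\ell)$, $R=(y_1,\ldots,y_r)$, $\mathcal{T}_{L,R}$ is the set of trees on $L\sqcup R$ with all edges between $L$ and $R$ and no two edges $(x_p,y_q),(x_t,y_u)$ with $p<t$, $q>u$. Compounded reduction at vertex $i\in\{2,\ldots,n\}$ of a graph $H$ in which $i$ has incoming edges (here $a_i>0$): with $\mathcal{I}_i(H)$, $\mathcal{O}_i(H)$ the multisets of edges $(\cdot,i)$, $(i,\cdot)$ in fixed orderings, $L=(\mathcal{I}_i(H),v_i)$ ($v_i$ a new symbol, last), $R=\mathcal{O}_i(H)$; for $T\in\mathcal{T}_{L,R}$, $H^{(i)}_T$ is $H$ with $\mathcal{I}_i(H)\cup\mathcal{O}_i(H)$ deleted and, for each tree edge, an edge $(r,s)$ added if it joins $(r,i)$ and $(i,s)$, or an edge $(i,s)$ if it joins $v_i$ and $(i,s)$. Each new edge is a formal sum of original edges (summands of the two joined edges,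 resp. of $(i,s)$), and $\mathcal{F}_H({\bf a})$ is identified with its image in the original edge space under $g\mapsto f$, $f(e)=\sum g(e')$ over edges $e'$ having $e$ as summand. Canonical compounded reduction tree: root the original graph; for $i=n,\ldots,2$ in order, every current leaf $H$ in which $i$ has incoming edges gets the children $H^{(i)}_T$, $T\in\mathcal{T}_{L,R}$. The canonical subdivision consists of the polytopes $\mathcal{F}_H({\bf a})$, one per leaf $H$ (the cells); two cells are of the same type if their leaf graphs are identical multigraphs. *)

(* Defs.v *)
From mathcomp Require Import all_boot.
Set Implicit Arguments. Unset Strict Implicit. Unset Printing Implicit Defensive.

(* Directed edges (tail, head) of a multigraph on vertices 1..n+1;
   a multigraph is a list of edges, considered up to permutation (perm_eq). *)
Definition edge := (nat * nat)%type.
Definition mgraph := seq edge.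

Definition in_edges (H : mgraph) (i : nat) : mgraph := [seq e <- H | e.2 == i].
Definition out_edges (H : mgraph) (i : nat) : mgraph := [seq e <- H | e.1 == i].

(* ---------- Noncrossing trees T_{L,R} ----------
   L = (x_0,...,x_{l-1}), R = (y_0,...,y_{r-1}) are represented by their index
   sets 'I_l and 'I_r; a candidate tree is a set of edges (p,q) meaning x_p -- y_q
   (all edges go between L and R). *)
Definition bip_adj (l r : nat) (T : {set 'I_l * 'I_r}) : rel ('I_l + 'I_r)%type :=
  fun x y => match x, y with
             | inl p, inr q => (p, q) \in T
             | inr q, inl p => (p, q) \in T
             | _, _ => false
             end.

Definition is_tree (l r : nat) (T : {set 'I_l * 'I_r}) : bool :=
  [forall x, forall y, connect (bip_adj T) x y] && (#|T| == l + r - 1).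

Definition noncrossing (l r : nat) (T : {set 'I_l * 'I_r}) : bool :=
  [forall e1 in T, forall e2 in T,
     ~~ ((val e1.1 < val e2.1) && (val e2.2 < val e1.2))].

Definition NCtrees (l r : nat) : seq {set 'I_l * 'I_r} :=
  enum [set T : {set 'I_l * 'I_r} | is_tree T && noncrossing T].

(* ---------- Compounded reduction at vertex i ----------
   I = ordered list of incoming edges (.,i), O = ordered list of outgoing edges
   (i,.).  L = (I, v_i) has size (size I).+1 (v_i is the last index, size I),
   R = O.  A tree edge (p,q) joining (r,i) and (i,s) gives the edge (r,s);
   joining v_i and (i,s) gives the edge (i,s). *)
Definition new_edge (i : nat) (I O : mgraph) (p q : nat) : edge :=
  (if p < size I then (nth (0, 0) I p).1 else i, (nth (0, 0) O q).2).

Definition reduce (H : mgraph) (i : nat) (I O : mgraph)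
    (T : {set 'I_(size I).+1 * 'I_(size O)}) : mgraph :=
  [seq e <- H | (e.2 != i) && (e.1 != i)]
  ++ [seq new_edge i I O (val pq.1) (val pq.2) | pq <- enum T].

Definition reductions (H : mgraph) (i : nat) (I O : mgraph) : seq mgraph :=
  [seq reduce H i T | T <- NCtrees (size I).+1 (size O)].

(* ---------- Orderings ----------
   The "fixed orderings" of I_i(H), O_i(H) are arbitrary; they may even differ
   from node to node of the reduction tree.  A node is identified by its address
   (the list of child indices from the root), and an ordering choice is a function
   giving, for each address, vertex i and graph H, permutations of the in- and
   out-edge multisets of i in H. *)
Definition ordering := seq nat -> nat -> mgraph -> mgraph * mgraph.

Definition valid_ordering (ord : ordering) : Prop :=
  forall (adr : seq nat) (i : nat) (H : mgraph),
    perm_eq (ord adr i H).1 (in_edges H i) /\ perm_eq (ord adr i H).2 (out_edges H i).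

Definition node := (seq nat * mgraph)%type.

Definition children (ord : ordering) (i : nat) (nd : node) : seq node :=
  let adr := nd.1 in
  let H := nd.2 in
  let IO := ord adr i H in
  let cs := reductions H i IO.1 IO.2 in
  [seq (rcons adr k, nth [::] cs k) | k <- iota 0 (size cs)].

Definition step (ord : ordering) (i : nat) (leaves : seq node) : seq node :=
  flatten [seq (if has (fun e : edge => e.2 == i) nd.2 then children ord i nd
                else [:: nd]) | nd <- leaves].

Definition canonical_leaves (ord : ordering) (n : nat) (G : mgraph) : seq mgraph :=
  [seq nd.2 | nd <- foldl (fun lv i => step ord i lv) [:: ([::], G)]
                             (rev (iota 2 n.-1))].

(* number of types: number of classes of identical multigraphs (perm_eq)
   among the leaf graphs (one cell per leaf) *)
Definition num_types (L : seq mgraph) : nat :=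
  size [seq k <- iota 0 (size L) |
          ~~ has (fun H => perm_eq H (nth [::] L k)) (take k L)].

Definition Pi (n : nat) : mgraph :=
  [seq (i, i.+1) | i <- iota 1 n] ++ [seq (i, n.+1) | i <- iota 1 n].

Definition catalan (n : nat) : nat := 'C(n.*2, n) %/ n.+1.

(* Main.v *)
Require Import Defs.
From mathcomp Require Import all_boot.
From mathcomp Require Import zify.
Set Implicit Arguments. Unset Strict Implicit. Unset Printing Implicit Defensive.
Set Bullet Behavior "Strict Subproofs".

Fixpoint g (a m : nat) : nat :=
  if a is a'.+1 then \sum_(x <- iota 1 m) g a' x.+1 else 1.

Lemma gS a m : g a.+1 m.+1 = g a.+1 m + g a m.+2.
Proof.
have e : iota 1 m.+1 = iota 1 m ++ [:: m.+1] by rewrite -(addn1 m) iotaD add1n addn1.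
by rewrite -[LHS]/(\sum_(x <- iota 1 m.+1) g a x.+1) e big_cat big_seq1.
Qed.

Lemma g_closed a m : g a m * (a + m) = m * 'C((a + a + m).-1, a).
Proof.
elim: a m => [|a IH] m.
  by rewrite /= bin0 add0n mul1n muln1.
elim: m => [|m IHm]; first by rewrite /= big_nil.
rewrite gS.
have h1 := IHm. have h2 := IH m.+2.
have e1 : (a.+1 + a.+1 + m).-1 = (a + a + m).+1 by rewrite !addSn addnS.
have e2 : (a + a + m.+2).-1 = (a + a + m).+1 by rewrite !addnS.
have e3 : (a.+1 + a.+1 + m.+1).-1 = (a + a + m).+2 by rewrite !addSn !addnS.
rewrite e1 in h1; rewrite e2 in h2; rewrite e3.
set X := g a.+1 m in h1 *. set Y := g a m.+2 in h2 *.
set B := 'C((a + a + m).+1, a) in h2 *.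
set C1 := 'C((a + a + m).+1, a.+1) in h1 *.
have hC : a.+1 * C1 = (a + m).+1 * B.
  rewrite /C1 mul_bin_left /B; congr (_ * _); lia.
rewrite binS -/C1 -/B.
apply/eqP; rewrite -(@eqn_pmul2l (a.+1 * (a + m).+1)) ?muln_gt0 //; apply/eqP.
have -> : a.+1 * (a + m).+1 * ((X + Y) * (a.+1 + m.+1))
   = a.+1 * (a.+2 + m) * (X * (a.+1 + m)) + a.+1 * (a + m).+1 * (Y * (a + m.+2)).
  lia.
rewrite h1 h2.
have -> : a.+1 * (a.+2 + m) * (m * C1) = (a.+2 + m) * m * (a.+1 * C1) by lia.
rewrite hC.
have -> : a.+1 * (a + m).+1 * (m.+1 * (C1 + B)) = (a + m).+1 * m.+1 * (a.+1 * C1) + a.+1 * (a + m).+1 * m.+1 * B by lia.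
rewrite hC. lia.
Qed.

Lemma catalan_g n : 0 < n -> catalan n = g n.-1 2.
Proof.
case: n => // n _ /=.
rewrite /catalan.
have := g_closed n 2.
have -> : (n + n + 2).-1 = (n + n).+1 by lia.
rewrite addn2 => h.
have -> : 'C(n.+1.*2, n.+1) = g n 2 * n.+2.
  rewrite h -addnn addSn addnS binS.
  have -> : 'C((n + n).+1, n) = 'C((n + n).+1, n.+1).
    rewrite -{1}(@bin_sub (n+n).+1 n) //; last lia.
    congr 'C(_, _); lia.
  lia.
by rewrite mulnK.
Qed.

Section NC.
Variable r : nat.
Definition c0 (T : {set 'I_2 * 'I_r}) := #|[set pq in T | val pq.1 == 0]|.
Definition c1 (T : {set 'I_2 * 'I_r}) := #|[set pq in T | val pq.1 == 1]|.
Definition Tk (k : nat) : {set 'I_2 * 'I_r} :=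
  [set pq | ((val pq.1 == 0) && (val pq.2 <= k)) || ((val pq.1 == 1) && (k <= val pq.2))].

Lemma c01 T : c0 T + c1 T = #|T|.
Proof.
rewrite /c0 /c1 -(cardID [set pq | val pq.1 == 0] T); congr (_ + _); apply: eq_card => -[p q];
  rewrite !inE; case: p => [[|[|p]] Hp] //=; rewrite ?andbF ?andbT //.
Qed.

Lemma card_lt k : k <= r -> #|[set q : 'I_r | val q < k]| = k.
Proof.
move=> kr.
have -> : [set q : 'I_r | val q < k] = widen_ord kr @: [set: 'I_k].
  apply/setP => q; rewrite inE; apply/idP/imsetP.
    by move=> qk; exists (Ordinal qk); rewrite ?inE //; apply: val_inj.
  by case=> x _ ->; rewrite /= ltn_ord.
by rewrite card_imset ?cardsT ?card_ord //; by move=> x y /(congr1 val) /= /val_inj.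
Qed.

Lemma c0Tk k : k < r -> c0 (Tk k) = k.+1.
Proof.
move=> kr; rewrite /c0 -(card_lt kr).
rewrite -(@card_imset _ _ (fun q => (ord0 : 'I_2, q)) [set q : 'I_r | val q < k.+1]); last by move=> x y [].
apply: eq_card => -[p q]; rewrite !inE; apply/idP/imsetP.
  case: p => [[|[|p]] Hp] //=; rewrite ?orbF ?andbT ?andbF // => qk.
  have -> : Ordinal Hp = ord0 by apply: val_inj.
  by exists q; rewrite ?inE ?ltnS.
by case=> x; rewrite inE ltnS => xk [-> ->] /=; rewrite xk.
Qed.

Lemma c1Tk k : k < r -> c1 (Tk k) = r - k.
Proof.
move=> kr; rewrite /c1.
have <- : #|~: [set q : 'I_r | val q < k]| = r - k.
  have := cardsC [set q : 'I_r | val q < k]; rewrite card_lt ?cardsT ?card_ord; [lia | exact: ltnW].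
rewrite -(@card_imset _ _ (fun q => (ord_max : 'I_2, q)) (~: [set q : 'I_r | val q < k])); last by move=> x y [].
apply: eq_card => -[p q]; rewrite !inE; apply/idP/imsetP.
  case: p => [[|[|p]] Hp] //=; rewrite ?orbF ?andbT ?andbF //= => qk.
  have -> : Ordinal Hp = ord_max by apply: val_inj.
  by exists q; rewrite ?inE -?leqNgt.
by case=> x; rewrite !inE => xk [-> ->] /=; rewrite -leqNgt in xk; by rewrite xk.
Qed.

Lemma cardTk k : k < r -> #|Tk k| = r.+1.
Proof. move=> kr; rewrite -c01 c0Tk // c1Tk //; lia. Qed.

Lemma Tk_in k : k < r -> Tk k \in NCtrees 2 r.
Proof.
move=> kr; rewrite /NCtrees mem_enum inE; apply/andP; split; last first.
  apply/forall_inP => -[p1 q1]; rewrite inE => h1; apply/forall_inP => -[p2 q2]; rewrite inE => h2 /=.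
  apply/negP => /andP [lt1 lt2].
  move: p1 p2 h1 h2 lt1 lt2 => [[|[|p1]] H1] [[|[|p2]] H2] //=. all: try lia.
apply/andP; split; last by rewrite cardTk //; apply/eqP; lia.
pose kk : 'I_r := Ordinal kr.
have sym : symmetric (bip_adj (Tk k)) by move=> [x|x] [y|y].
have toL0 : forall x, connect (bip_adj (Tk k)) x (inl ord0).
  have e0 : connect (bip_adj (Tk k)) (inl ord_max) (inl ord0).
    apply: (@connect_trans _ _ (inr kk)); apply: connect1; rewrite /= inE /= leqnn ?orbT //.
  move=> [p|q].
    case: p => [[|[|p]] Hp] //.
      by have -> : Ordinal Hp = ord0 by apply: val_inj.
    by have -> : Ordinal Hp = ord_max by apply: val_inj.
  case: (leqP (val q) k) => qk.
    by apply: connect1; rewrite /= inE /= qk.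
  apply: (@connect_trans _ _ (inl ord_max)) => //.
  by apply: connect1; rewrite /= inE /= ltnW.
apply/forallP => x; apply/forallP => y.
apply: (@connect_trans _ _ (inl ord0)) => //.
by rewrite (sym_connect_sym sym).
Qed.

Lemma NC_Tk T : T \in NCtrees 2 r -> exists2 k, k < r & T = Tk k.
Proof.
rewrite /NCtrees mem_enum inE => /andP [/andP [_ /eqP cT] nc].
have cT' : #|T| = r.+1 by rewrite cT; lia.
pose A := [set q : 'I_r | (ord0 : 'I_2, q) \in T].
have A0 : 0 < #|A|.
  rewrite lt0n; apply/negP => /eqP /cards0_eq A0.
  have : T \subset setX [set ord_max] [set: 'I_r].
    apply/subsetP => -[p q] pqT; rewrite !inE andbT.
    case: p pqT => [[|[|p]] Hp] //= pqT.
      have : q \in A by rewrite inE; have -> : (ord0 : 'I_2) = Ordinal Hp by apply: val_inj.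
      by rewrite A0 inE.
  move/subset_leq_card; rewrite cardsX cards1 cardsT card_ord cT'; lia.
have [q0 q0A qmax] := eq_bigmax_cond (fun q : 'I_r => val q) A0.
set k := \max_(q in A) val q in qmax.
exists k; first by rewrite qmax ltn_ord.
apply/eqP; rewrite eqEcard cardTk; last by rewrite qmax ltn_ord.
rewrite cT' leqnn andbT; apply/subsetP => -[p q] pqT; rewrite inE /=.
case: p pqT => [[|[|p]] Hp] //= pqT.
  have qA : q \in A by rewrite inE; have -> : (ord0 : 'I_2) = Ordinal Hp by apply: val_inj.
  rewrite orbF /k; have := @leq_bigmax_cond _ (mem A) (fun q : 'I_r => val q) q qA; exact.
rewrite qmax; move: q0A; rewrite inE => q0T.
have := forall_inP nc _ q0T; move/forall_inP => /(_ _ pqT) /=.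
by rewrite -leqNgt.
Qed.

Lemma NC_c0 : perm_eq [seq c0 T | T <- NCtrees 2 r] (iota 1 r).
Proof.
apply: uniq_perm; last 1 first.
- move=> x; rewrite mem_iota; apply/mapP/idP.
    by case=> T /NC_Tk [k kr ->] ->; rewrite c0Tk //; lia.
  move=> /andP [x1 xr]; exists (Tk x.-1); first by apply: Tk_in; lia.
  by rewrite c0Tk; lia.
- rewrite map_inj_in_uniq ?enum_uniq // => T1 T2 /NC_Tk [k1 k1r ->] /NC_Tk [k2 k2r ->].
  by rewrite !c0Tk // => -[->].
- exact: iota_uniq.
Qed.

Lemma NC_c01 T : T \in NCtrees 2 r -> c0 T + c1 T = r.+1.
Proof. by move/NC_Tk => [k kr ->]; rewrite c01 cardTk. Qed.

End NC.

Lemma card_count (X : finType) (T : {set X}) (P : pred X) :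
  #|[set x in T | P x]| = count P (enum T).
Proof.
have -> : [set x in T | P x] = T :&: [set x | P x] by apply/setP => x; rewrite !inE.
rewrite cardE (perm_size (enum_setI _ _)) size_filter; apply: eq_count => x; by rewrite inE.
Qed.

Lemma count_split (X : Type) (a b : pred X) s :
  count a s = count (predI a b) s + count (predI a (predC b)) s.
Proof. elim: s => //= x s ->; case: (a x) (b x) => [] [] /=; lia. Qed.

Definition tl (i : nat) := fun e : edge => e.1 == i.

Definition Good (j : nat) (H : mgraph) : Prop :=
  [/\ all (fun e : edge => e.1 < e.2) H,
      forall i, 1 < i <= j -> in_edges H i = [:: (i.-1, i)] &
      forall i, 0 < i < j -> count (tl i) H = 2].

Section Child.
Variables (j : nat) (H O : mgraph).
Hypothesis j1 : 1 < j.
Hypothesis GH : Good j H.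
Hypothesis HO : all (fun e : edge => (e.1 == j) && (j < e.2)) O.
Variable T : {set 'I_2 * 'I_(size O)}.
Let K := @reduce H j [:: (j.-1, j)] O T.
Let rest := [seq e <- H | (e.2 != j) && (e.1 != j)].
Let nw := [seq new_edge j [:: (j.-1, j)] O (val pq.1) (val pq.2) | pq <- enum T].

Lemma K_cat : K = rest ++ nw. Proof. by []. Qed.

Lemma nw_prop e : e \in nw -> ((e.1 == j.-1) || (e.1 == j)) && (j < e.2).
Proof.
case/mapP => -[p q] _ -> /=; rewrite /new_edge /=.
have : nth (0,0) O q \in O by rewrite mem_nth.
move/(allP HO) => /andP [_ ->]; rewrite andbT; case: p => [[|[|p]] Hp] //=; by rewrite eqxx ?orbT.
Qed.

Lemma count_nw a : count a nw = count (fun pq : 'I_2 * 'I_(size O) =>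
     a (if val pq.1 < 1 then j.-1 else j, (nth (0,0) O (val pq.2)).2)) (enum T).
Proof. by rewrite count_map; apply: eq_count => -[[[|[|p]] Hp] q]. Qed.

Lemma K_good : Good j.-1 K.
Proof.
case: GH => lt ine cnt.
split.
- rewrite K_cat all_cat; apply/andP; split; first by rewrite all_filter; apply/allP => e eH; apply/implyP => _; exact: (allP lt).
  apply/allP => -[x y] /nw_prop /= /andP [/orP [] /eqP -> ]; lia.
- move=> i /andP [i1 ij].
  rewrite /in_edges K_cat filter_cat.
  have -> : [seq e <- nw | e.2 == i] = [::].
    apply/eqP; rewrite -[_ == _]negbK -has_filter; apply/hasPn => -[x y] /nw_prop /= /andP [_ h]; apply/eqP; lia.
  rewrite cats0 /rest -filter_predI.
  rewrite -(ine i); last lia.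
  apply: eq_in_filter => -[x y] eH /=.
  have := allP lt _ eH => /=.
  case: eqP => //= ->; move=> h; apply/andP; split; apply/eqP; lia.
- move=> i /andP [i0 ij].
  rewrite K_cat count_cat.
  have -> : count (tl i) nw = 0.
    apply/eqP; rewrite -leqn0 leqNgt -has_count; apply/hasPn => -[x y] /nw_prop /= /andP [h _]; rewrite /tl /=; apply/eqP; case/orP: h => /eqP; lia.
  rewrite addn0 /rest count_filter -(cnt i); last lia.
  apply: eq_in_count => -[x y] eH /=; rewrite /tl /=.
  case: eqP => //= ei; apply/andP; split; apply/eqP => ej.
    have : (x, y) \in in_edges H j by rewrite mem_filter /= eH andbT; apply/eqP.
    rewrite ine; last by rewrite j1 leqnn.
    rewrite inE => /eqP [ee _]; lia.
  lia.
Qed.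

Lemma K_cnt0 : count (tl j.-1) K = (c0 T).+1.
Proof.
case: GH => lt ine cnt.
rewrite K_cat count_cat /rest count_filter count_nw /c0 card_count.
have -> : count (predI (tl j.-1) (fun e : edge => (e.2 != j) && (e.1 != j))) H = 1.
  have := count_split (tl j.-1) (fun e : edge => (e.2 != j) && (e.1 != j)) H.
  rewrite cnt; last lia.
  have -> : count (predI (tl j.-1) (predC (fun e : edge => (e.2 != j) && (e.1 != j)))) H = 1.
    have -> : count (predI (tl j.-1) (predC (fun e : edge => (e.2 != j) && (e.1 != j)))) H
       = count (tl j.-1) (in_edges H j).
      rewrite /in_edges count_filter; apply: eq_count => e /=; rewrite /tl.
      case: eqP => //= ->; rewrite negb_and !negbK; case: eqP => //=; lia.
    by rewrite ine ?j1 //= /tl eqxx.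
  lia.
rewrite add1n; congr _.+1; apply: eq_count => -[p q] /=.
rewrite /tl /=; case: p => [[|[|p]] Hp] //=; rewrite ?eqxx //=; apply/negbTE/eqP; lia.
Qed.

Lemma K_cnt1 : count (tl j) K = c1 T.
Proof.
rewrite K_cat count_cat /rest count_filter count_nw /c1 card_count.
have -> : count (predI (tl j) (fun e : edge => (e.2 != j) && (e.1 != j))) H = 0.
  apply/eqP; rewrite -leqn0 leqNgt -has_count; apply/hasPn => -[x y] _ /=; rewrite /tl /=.
  by apply/negP => /and3P [/eqP -> _ /eqP].
rewrite add0n; apply: eq_count => -[p q] /=.
rewrite /tl /=; case: p => [[|[|p]] Hp] //=; rewrite ?eqxx //=; apply/negbTE/eqP; lia.
Qed.

Lemma K_cntS i : j < i -> count (tl i) K = count (tl i) H.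
Proof.
case: GH => lt ine cnt ji.
rewrite K_cat count_cat.
have -> : count (tl i) nw = 0.
  apply/eqP; rewrite -leqn0 leqNgt -has_count; apply/hasPn => -[x y] /nw_prop /= /andP [h _]; rewrite /tl /=; apply/eqP; case/orP: h => /eqP; lia.
rewrite addn0 /rest count_filter; apply: eq_in_count => -[x y] eH /=; rewrite /tl /=.
have := allP lt _ eH => /=.
case: eqP => //= ->; move=> h; apply/andP; split; apply/eqP; lia.
Qed.

End Child.

Lemma Pi_cnt n i : 0 < i <= n -> count (tl i) (Pi n) = 2.
Proof.
move=> /andP [i0 iN].
rewrite /Pi count_cat !count_map.
have h : forall f : nat -> nat, count (preim (fun x => (x, f x)) (tl i)) (iota 1 n) = 1.
  move=> f; rewrite (@eq_count _ _ (pred1 i)); last by move=> x; rewrite /= /tl.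
  rewrite count_uniq_mem ?iota_uniq // mem_iota.
  by rewrite (_ : (0 < i < 1 + n) = true) //; apply/andP; split; lia.
by rewrite -[2]/(1 + 1); congr (_ + _); apply: h.
Qed.

Lemma Pi_good n : Good n (Pi n).
Proof.
split.
- rewrite /Pi all_cat !all_map; apply/andP; split; apply/allP => x; rewrite mem_iota //= => ?; lia.
- move=> i /andP [i1 iN].
  rewrite /in_edges /Pi filter_cat !filter_map.
  have -> : [seq x <- iota 1 n | preim (fun i0 => (i0, n.+1)) (fun e : edge => e.2 == i) x] = [::].
    apply/eqP; rewrite -[_ == _]negbK -has_filter; apply/hasPn => x _ /=; apply/eqP; lia.
  rewrite cats0 (@eq_filter _ _ (pred1 i.-1)); last by move=> x /=; apply/eqP/eqP; lia.
  rewrite filter_pred1_uniq ?iota_uniq //=; last by rewrite mem_iota; apply/andP; split; lia.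
  by rewrite (ltn_predK i1).
- move=> i /andP [i0 iN]; apply: Pi_cnt; lia.
Qed.

Definition key n j (H : mgraph) := [seq count (tl i) H | i <- iota j.+1 (n - j)].

Definition Inv n j (L : seq node) :=
  [/\ forall nd, nd \in L -> Good j nd.2,
      \sum_(nd <- L) g j.-1 (count (tl j) nd.2) = catalan n &
      uniq [seq key n j nd.2 | nd <- L]].

Lemma children_snd ord j nd : valid_ordering ord -> 1 < j -> Good j nd.2 ->
  exists O : mgraph, [/\ all (fun e : edge => (e.1 == j) && (j < e.2)) O,
     size O = count (tl j) nd.2 &
     [seq x.2 | x <- children ord j nd] =
       [seq @reduce nd.2 j [:: (j.-1, j)] O T | T <- NCtrees 2 (size O)]].
Proof.
move=> vo j1 [lt ine cnt].
have [p1 p2] := vo nd.1 j nd.2.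
have I1 : (ord nd.1 j nd.2).1 = [:: (j.-1, j)].
  apply: perm_small_eq => //; rewrite -(ine j) //; by rewrite j1 leqnn.
exists (ord nd.1 j nd.2).2; split.
- apply/allP => e; rewrite (perm_mem p2) mem_filter => /andP [/eqP e1 eH].
  by rewrite e1 eqxx /= -{1}e1; apply: (allP lt).
- by rewrite (perm_size p2) size_filter.
- rewrite /children -map_comp /=.
  set cs := reductions _ _ _ _.
  have -> : [seq nth [::] cs k | k <- iota 0 (size cs)] = cs by exact: (mkseq_nth [::] cs).
  by rewrite /cs I1.
Qed.

Lemma step_eq ord j L : 1 < j -> (forall nd, nd \in L -> Good j nd.2) ->
  step ord j L = flatten [seq children ord j nd | nd <- L].
Proof.
move=> j1 gd; rewrite /step; congr flatten; apply/eq_in_map => nd ndL.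
case: (gd nd ndL) => _ ine _.
have -> : has (fun e : edge => e.2 == j) nd.2.
  by rewrite has_filter -/(in_edges nd.2 j) ine ?j1 ?leqnn.
by [].
Qed.

Lemma uniq_flat (X : eqType) (L : seq X) (Ks : X -> seq (seq nat)) (kk : X -> seq nat) :
  uniq (map kk L) -> (forall x, x \in L -> uniq (Ks x)) ->
  (forall x s, x \in L -> s \in Ks x -> behead s = kk x) -> uniq (flatten (map Ks L)).
Proof.
elim: L => //= x L IH /andP [kx uL] uK bK.
have IH' : uniq (flatten (map Ks L)).
  by apply: (IH uL) => [y yL|y s yL]; [apply: uK | apply: bK]; rewrite inE yL orbT.
rewrite cat_uniq uK ?mem_head // IH' andbT /=; apply/hasPn => s /flattenP [t /mapP [y yL ->] st]; apply/negP => sx.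
have e1 := bK x s (mem_head _ _) sx.
have yL' : y \in x :: L by rewrite inE yL orbT.
have e2 := bK y s yL' st.
by move: kx; rewrite -e1 e2 map_f.
Qed.

Lemma uniq_c1 r : uniq [seq c1 T | T <- NCtrees 2 r].
Proof.
have -> : [seq c1 T | T <- NCtrees 2 r] = [seq r.+1 - x | x <- [seq c0 T | T <- NCtrees 2 r]].
  rewrite -map_comp; apply/eq_in_map => T TN /=; have := NC_c01 TN; lia.
rewrite map_inj_in_uniq ?(perm_uniq (NC_c0 r)) ?iota_uniq //.
move=> x y; rewrite !(perm_mem (NC_c0 r)) !mem_iota => /andP [_ xr] /andP [_ yr]; lia.
Qed.

Lemma Inv_step n ord j L : valid_ordering ord -> 1 < j <= n -> Inv n j L -> Inv n j.-1 (step ord j L).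
Proof.
move=> vo /andP [j1 jn] [gd sm uq].
rewrite step_eq //.
case: j j1 jn gd sm uq => [|[|j]] // _ jn gd sm uq /=.
split.
- move=> nd' /flattenP [cs /mapP [nd ndL ->] nd'in].
  have [O [HO sO eqc]] := children_snd vo (isT : 1 < j.+2) (gd nd ndL).
  have : nd'.2 \in [seq x.2 | x <- children ord j.+2 nd] by apply: map_f.
  rewrite eqc => /mapP [T _ ->].
  exact: (K_good (isT : 1 < j.+2) (gd nd ndL) HO).
- rewrite big_flatten big_map -sm; apply: eq_big_seq => nd ndL /=.
  have [O [HO sO eqc]] := children_snd vo (isT : 1 < j.+2) (gd nd ndL).
  rewrite -[LHS](big_map snd xpredT (fun K => g j (count (tl j.+1) K))) eqc big_map.
  rewrite (eq_big_seq (fun T => g j (c0 T).+1)); last first.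
    by move=> T _; rewrite (K_cnt0 (isT : 1 < j.+2) (gd nd ndL) HO).
  rewrite -(big_map (@c0 (size O)) xpredT (fun x => g j x.+1)) (perm_big _ (NC_c0 (size O))).
  by rewrite -sO.
- rewrite map_flatten -map_comp.
  apply: (@uniq_flat _ L _ (fun nd => key n j.+2 nd.2)) => //.
  + move=> nd ndL.
    have [O [HO sO eqc]] := children_snd vo (isT : 1 < j.+2) (gd nd ndL).
    rewrite /= (map_comp (key n j.+1) snd) eqc -map_comp.
    have -> : [seq (key n j.+1 \o (fun T => @reduce nd.2 j.+2 [:: (j.+1, j.+2)] O T)) i | i <- NCtrees 2 (size O)]
       = [seq c1 T :: key n j.+2 nd.2 | T <- NCtrees 2 (size O)].
      apply/eq_in_map => T _ /=.
      rewrite /key (_ : n - j.+1 = (n - j.+2).+1); last lia.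
      rewrite /= (K_cnt1 nd.2 (isT : 1 < j.+2) HO); congr (_ :: _).
      apply/eq_in_map => i; rewrite mem_iota => /andP [ji _].
      exact: (K_cntS (isT : 1 < j.+2) (gd nd ndL) HO).
    rewrite (map_comp (fun x => x :: key n j.+2 nd.2) (@c1 (size O))) map_inj_uniq ?uniq_c1 //.
    by move=> x y [].
  + move=> nd s ndL /mapP [nd' nd'in ->].
    have [O [HO sO eqc]] := children_snd vo (isT : 1 < j.+2) (gd nd ndL).
    have : nd'.2 \in [seq x.2 | x <- children ord j.+2 nd] by apply: map_f.
    rewrite eqc => /mapP [T _ ->].
    rewrite /key (_ : n - j.+1 = (n - j.+2).+1); last lia.
    rewrite /=; apply/eq_in_map => i; rewrite mem_iota => /andP [ji _].
    exact: (K_cntS (isT : 1 < j.+2) (gd nd ndL) HO).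
Qed.

Lemma Inv_fold n ord m L : valid_ordering ord -> m < n -> Inv n m.+1 L ->
  Inv n 1 (foldl (fun lv i => step ord i lv) L (rev (iota 2 m))).
Proof.
move=> vo; elim: m L => [|m IH] L mn I //.
have -> : iota 2 m.+1 = rcons (iota 2 m) m.+2.
  by rewrite -cats1 -(addn1 m) iotaD add2n addn1.
rewrite rev_rcons /=; apply: IH; first lia.
by apply: (Inv_step vo) => //; apply/andP; split; lia.
Qed.

Lemma Inv_final n L : Inv n 1 L -> num_types [seq nd.2 | nd <- L] = catalan n.
Proof.
case=> _ sm uq.
have szL : size L = catalan n.
  by rewrite -sm /= (eq_bigr (fun _ => 1)) // sum1_size.
rewrite /num_types.
set S := [seq nd.2 | nd <- L].
have uS : uniq [seq key n 1 H | H <- S] by rewrite /S -map_comp.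
have szS : size S = size L by rewrite size_map.

have -> : [seq k <- iota 0 (size S) | ~~ has (fun H => perm_eq H (nth [::] S k)) (take k S)]
   = iota 0 (size S).
  apply/all_filterP/allP => k; rewrite mem_iota add0n => /andP [_ kS].
  apply/hasPn => H' /(nthP [::]) [i ilt <-].
  rewrite size_take kS in ilt.
  rewrite nth_take //; apply/negP => pe.
  have ek : key n 1 (nth [::] S i) = key n 1 (nth [::] S k).
    apply/eq_map => x; exact: (permP pe).
  have kL : k < size L by rewrite -szS.
  have iS : i < size S by apply: ltn_trans ilt kS.
  have iL : i < size L by rewrite -szS.
  move: ek; rewrite -!(nth_map [::] [::] (key n 1)) // => /eqP.
  rewrite nth_uniq ?size_map // => /eqP ik.
  by rewrite ik ltnn in ilt.
by rewrite size_iota szS szL.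
Qed.

Lemma Inv_init n : 0 < n -> Inv n n [:: ([::], Pi n)].
Proof.
move=> n0; split.
- by move=> nd; rewrite inE => /eqP -> /=; apply: Pi_good.
- by rewrite big_seq1 /= Pi_cnt ?n0 ?leqnn // catalan_g.
- by [].
Qed.

Unset Implicit Arguments.
Theorem corollary6p3 (n : nat) (a : nat -> nat) (ord : ordering) :
  0 < n ->
  (forall k, 1 <= k <= n -> 0 < a k) ->
  valid_ordering ord ->
  num_types (canonical_leaves ord n (Pi n)) = catalan n.
Proof.
move=> n0 _ vo.
rewrite /canonical_leaves; apply: Inv_final.
apply: Inv_fold => //; first lia.
by rewrite (ltn_predK n0); apply: Inv_init.
Qed.
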